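(* Let $p,q$ be fixed distinct propositional letters (only $p$ is used). Define $p^0:=p$ and $p^{n+1}:=p\to p^n$, and for $T\subseteq\omega$ let $K_T=\{p\looparrowright p^k:k\in T\}$. Then: (i) for every non-empty $T\subseteq\omega\setminus\{0\}$, the logic $\mathcal{F}K_T$ is Epstein complete; more precisely, $\mathcal{F}K_T=\{\varphi\in\mathsf{FOR}:\mathfrak{R}\vDash\varphi\text{ for all }\mathfrak{R}\in\mathsf{R}^T\}$, where $\mathfrak{R}^T_0=\{\langle\sigma(p),\sigma(p^k)\rangle:\sigma\text{ a substitution},\ k\in T\}$ and $\mathsf{R}^T=\{\mathfrak{R}\subseteq\mathsf{FOR}^2:\mathfrak{R}^T_0\subseteq\mathfrak{R}\}$; (ii) for non-empty $T,V\subseteq\omega\setminus\{0\}$ with $T\neq V$ we have $\mathcal{F}K_T\neq\mathcal{F}K_V$. Consequently there are exactly $2^{\aleph_0}$ Epstein complete logics (extensions of $\mathcal{F}$).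
   Context: Language: propositional letters $\Phi=\{p_0,p_1,\dots\}$; connectives $\neg$ (unary), $\lor,\wedge,\to,\leftrightarrow,\vartriangle,\looparrowright$ (binary); $\mathsf{FOR}$ the set of all formulas. A substitution is an endomorphism of the free formula algebra (determined by an arbitrary map $\Phi\to\mathsf{FOR}$). An Epstein model is $\langle v,\mathfrak{R}\rangle$ with $v:\Phi\to\{0,1\}$ and $\mathfrak{R}\subseteq\mathsf{FOR}^2$; truth: letters via $v$, boolean connectives classical, $\langle v,\mathfrak{R}\rangle\vDash\varphi\vartriangle\psi$ iff both $\varphi,\psi$ true and $\langle\varphi,\psi\rangle\in\mathfrak{R}$, $\langle v,\mathfrak{R}\rangle\vDash\varphi\looparrowright\psi$ iff $\varphi\to\psi$ true and $\langle\varphi,\psi\rangle\in\mathfrak{R}$. $\mathfrak{R}\vDash\varphi$ iff $\langle v,\mathfrak{R}\rangle\vDash\varphi$ for every valuation $v$. $\mathcal{F}$ is the least set of formulas containing all classical tautologies of this language (substitution instances of propositional tautologies) and the axioms $(p\looparrowright q)\to(p\to q)$ and $(p\vartriangle q)\leftrightarrow((p\looparrowright q)\wedge(p\wedge q))$, closed under uniform substitution and modus ponens; $\mathcal{F}$ coincides with the set of formulas true in all Epstein models. For $\Lambda\subseteq\mathsf{FOR}$, $\mathcal{F}\Lambda$ is the least set containing $\mathcal{F}\cup\Lambda$ closed under uniform substitution and modus ponens. A logic is a set of formulas containing $\mathcal{F}$ closed under uniform substitution and modus ponens. A logic $\lambda$ is Epstein complete iff there is a set $X$ of Epstein relations with $\lambda=\{\varphi:\mathfrak{R}\vDash\varphi\text{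 for all }\mathfrak{R}\in X\}$; otherwise Epstein incomplete. *)

(* Defs.v *)
From Stdlib Require Import Bool.

Inductive FOR : Type :=
| Var : nat -> FOR
| Neg : FOR -> FOR
| Or  : FOR -> FOR -> FOR
| And : FOR -> FOR -> FOR
| Imp : FOR -> FOR -> FOR
| Iff : FOR -> FOR -> FOR
| RAnd : FOR -> FOR -> FOR
| RImp : FOR -> FOR -> FOR.

Fixpoint subst (s : nat -> FOR) (f : FOR) : FOR :=
  match f with
  | Var i => s i
  | Neg a => Neg (subst s a)
  | Or a b => Or (subst s a) (subst s b)
  | And a b => And (subst s a) (subst s b)
  | Imp a b => Imp (subst s a) (subst s b)
  | Iff a b => Iff (subst s a) (subst s b)
  | RAnd a b => RAnd (subst s a) (subst s b)
  | RImp a b => RImp (subst s a) (subst s b)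
  end.

Fixpoint boolean (f : FOR) : Prop :=
  match f with
  | Var _ => True
  | Neg a => boolean a
  | Or a b | And a b | Imp a b | Iff a b => boolean a /\ boolean b
  | RAnd _ _ | RImp _ _ => False
  end.

Fixpoint sat (v : nat -> bool) (R : FOR -> FOR -> Prop) (f : FOR) : Prop :=
  match f with
  | Var i => v i = true
  | Neg a => ~ sat v R a
  | Or a b => sat v R a \/ sat v R b
  | And a b => sat v R a /\ sat v R b
  | Imp a b => sat v R a -> sat v R b
  | Iff a b => sat v R a <-> sat v R b
  | RAnd a b => sat v R a /\ sat v R b /\ R a b
  | RImp a b => (sat v R a -> sat v R b) /\ R a b
  end.

Definition valid (R : FOR -> FOR -> Prop) (f : FOR) : Prop :=
  forall v : nat -> bool, sat v R f.

(* propositional tautology: boolean formula true under every valuation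
   (on boolean formulas the relation plays no role) *)
Definition prop_taut (f : FOR) : Prop :=
  boolean f /\ forall v : nat -> bool, sat v (fun _ _ => False) f.

Definition taut (f : FOR) : Prop :=
  exists (g : FOR) (s : nat -> FOR), prop_taut g /\ f = subst s g.

Definition p : FOR := Var 0.
Definition q : FOR := Var 1.

Inductive FL (Lam : FOR -> Prop) : FOR -> Prop :=
| FL_taut : forall f, taut f -> FL Lam f
| FL_ax1 : FL Lam (Imp (RImp p q) (Imp p q))
| FL_ax2 : FL Lam (Iff (RAnd p q) (And (RImp p q) (And p q)))
| FL_hyp : forall f, Lam f -> FL Lam f
| FL_subst : forall s f, FL Lam f -> FL Lam (subst s f)
| FL_mp : forall f g, FL Lam f -> FL Lam (Imp f g) -> FL Lam g.

Definition Fcal : FOR -> Prop := FL (fun _ => False).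

Definition is_logic (L : FOR -> Prop) : Prop :=
  (forall f, Fcal f -> L f) /\
  (forall s f, L f -> L (subst s f)) /\
  (forall f g, L f -> L (Imp f g) -> L g).

Definition same_set (A B : FOR -> Prop) : Prop := forall f, A f <-> B f.

Definition epstein_complete (L : FOR -> Prop) : Prop :=
  is_logic L /\
  exists X : (FOR -> FOR -> Prop) -> Prop,
    same_set L (fun f => forall R, X R -> valid R f).

Fixpoint ppow (n : nat) : FOR :=
  match n with
  | O => p
  | S m => Imp p (ppow m)
  end.

Definition K (T : nat -> Prop) : FOR -> Prop :=
  fun f => exists k, T k /\ f = RImp p (ppow k).

Definition R0 (T : nat -> Prop) : FOR -> FOR -> Prop :=
  fun a b => exists (s : nat -> FOR) k, T k /\ a = subst s p /\ b = subst s (ppow k).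

Definition RT (T : nat -> Prop) : (FOR -> FOR -> Prop) -> Prop :=
  fun R => forall a b, R0 T a b -> R a b.

Definition admissible (T : nat -> Prop) : Prop :=
  (exists k, T k) /\ (forall k, T k -> k <> 0).

(* Main.v *)
Require Import Defs.
From Stdlib Require Import List Classical ClassicalEpsilon FunctionalExtensionality PeanoNat.
From Stdlib Require Cantor.
Import ListNotations.

Definition bsat (v : nat -> bool) (R : FOR -> FOR -> Prop) (g : FOR) : bool :=
  if excluded_middle_informative (sat v R g) then true else false.

Lemma bsat_true v R g : bsat v R g = true <-> sat v R g.
Proof.
  unfold bsat; destruct (excluded_middle_informative (sat v R g)); split; intros; auto; discriminate.
Qed.

Lemma sat_subst : forall s f v R,
  sat v R (subst s f) <->
  sat (fun i => bsat v R (s i)) (fun a b => R (subst s a) (subst s b)) f.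
Proof.
  intros s f v R; induction f; simpl;
  try (rewrite IHf1, IHf2); try rewrite IHf; try tauto.
  rewrite bsat_true; tauto.
Qed.

Lemma sat_bool : forall g v R R', boolean g -> (sat v R g <-> sat v R' g).
Proof.
  induction g; simpl; intros v R R' Hb; try tauto;
  try (destruct Hb as [H1 H2]; rewrite (IHg1 v R R' H1), (IHg2 v R R' H2); tauto).
  rewrite (IHg v R R' Hb); tauto.
Qed.

Lemma subst_comp : forall s1 s f,
  subst s (subst s1 f) = subst (fun i => subst s (s1 i)) f.
Proof. induction f; simpl; congruence. Qed.

Lemma subst_id : forall f, subst Var f = f.
Proof. induction f; simpl; congruence. Qed.

Lemma ppow_mono : forall s k v R, sat v R (subst s p) -> sat v R (subst s (ppow k)).
Proof. induction k; simpl; auto. Qed.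

Lemma R0_imp : forall T x y, R0 T x y -> forall v R, sat v R x -> sat v R y.
Proof.
  intros T x y [s [k [_ [-> ->]]]] v R; apply ppow_mono.
Qed.

Lemma soundness : forall T f, FL (K T) f -> forall R, RT T R -> valid R f.
Proof.
  intros T f H; induction H; intros R HR v.
  - destruct H as [g [s [[Hb Hv] ->]]].
    apply sat_subst. apply (sat_bool g _ (fun _ _ => False)); auto.
  - simpl; tauto.
  - simpl; tauto.
  - destruct H as [k [Hk ->]]. simpl. split.
    + intro H. pose proof (ppow_mono Var k v R H) as H'. rewrite subst_id in H'. exact H'.
    + apply HR. exists Var, k. rewrite !subst_id. auto.
  - apply sat_subst. apply IHFL.
    intros a b [s1 [k [Hk [-> ->]]]]. apply HR. rewrite !subst_comp.
    exists (fun i => subst s (s1 i)), k; auto.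
  - simpl in IHFL2. apply (IHFL2 R HR v). apply IHFL1; auto.
Qed.

Definition FOR_eq_dec : forall x y : FOR, {x = y} + {x <> y}.
Proof. decide equality; apply Nat.eq_dec. Defined.

Fixpoint atoms (f : FOR) : list FOR :=
  match f with
  | Var i => [Var i]
  | Neg a => atoms a
  | Or a b | And a b | Imp a b | Iff a b => atoms a ++ atoms b
  | RAnd a b => RAnd a b :: RImp a b :: atoms a ++ atoms b
  | RImp a b => RImp a b :: atoms a ++ atoms b
  end.

Fixpoint idx (A : list FOR) (a : FOR) : nat :=
  match A with
  | [] => 0
  | x :: A' => if FOR_eq_dec x a then 0 else S (idx A' a)
  end.

Lemma idx_nth : forall A a, In a A -> nth (idx A a) A p = a.
Proof.
  induction A; simpl; intros b H; [contradiction|].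
  destruct (FOR_eq_dec a b); auto. destruct H; [congruence|auto].
Qed.

Fixpoint skel (A : list FOR) (g : FOR) : FOR :=
  match g with
  | Var i => Var (idx A (Var i))
  | Neg a => Neg (skel A a)
  | Or a b => Or (skel A a) (skel A b)
  | And a b => And (skel A a) (skel A b)
  | Imp a b => Imp (skel A a) (skel A b)
  | Iff a b => Iff (skel A a) (skel A b)
  | RAnd a b => Var (idx A (RAnd a b))
  | RImp a b => Var (idx A (RImp a b))
  end.

Lemma skel_bool : forall A g, boolean (skel A g).
Proof. induction g; simpl; auto. Qed.

Lemma subst_skel : forall A g, incl (atoms g) A ->
  subst (fun n => nth n A p) (skel A g) = g.
Proof.
  induction g; simpl; intro H;
  try (rewrite IHg1, IHg2; [reflexivity| |];
       intros z Hz; apply H; apply in_or_app; auto);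
  try (rewrite IHg; auto);
  apply idx_nth; apply H; simpl; auto.
Qed.

Lemma atoms_closed : forall f a, In a (atoms f) -> incl (atoms a) (atoms f).
Proof.
  induction f; simpl; intros a Ha;
  try (destruct (in_app_or _ _ _ Ha) as [H|H];
       [intros z Hz; apply in_or_app; left; apply (IHf1 a H); auto
       |intros z Hz; apply in_or_app; right; apply (IHf2 a H); auto]).
  - destruct Ha as [<-|[]]. simpl. intros z Hz; exact Hz.
  - auto.
  - destruct Ha as [<-|[<-|Ha]].
    + intros z Hz; exact Hz.
    + intros z Hz; simpl in Hz |- *. tauto.
    + destruct (in_app_or _ _ _ Ha) as [H|H];
       [intros z Hz; right; right; apply in_or_app; left; apply (IHf1 a H); auto
       |intros z Hz; right; right; apply in_or_app; right; apply (IHf2 a H); auto].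
  - destruct Ha as [<-|Ha].
    + intros z Hz; exact Hz.
    + destruct (in_app_or _ _ _ Ha) as [H|H];
       [intros z Hz; right; apply in_or_app; left; apply (IHf1 a H); auto
       |intros z Hz; right; apply in_or_app; right; apply (IHf2 a H); auto].
Qed.

Section Compl.
Variable T : nat -> Prop.
Variable A : list FOR.
Variable w : nat -> bool.

Definition ev (g : FOR) : Prop := sat w (fun _ _ => False) (skel A g).

Definition GoodAt (a : FOR) : Prop :=
  (forall x y, a = RImp x y ->
     (w (idx A a) = true -> ev x -> ev y) /\ (R0 T x y -> w (idx A a) = true)) /\
  (forall x y, a = RAnd x y ->
     (w (idx A a) = true <-> (w (idx A (RImp x y)) = true /\ ev x /\ ev y))).

Definition mv : nat -> bool := fun i => w (idx A (Var i)).
Definition mR : FOR -> FOR -> Prop :=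
  fun x y => (In (RImp x y) A /\ w (idx A (RImp x y)) = true) \/ R0 T x y.

Lemma model_ok : (forall a, In a A -> GoodAt a) ->
  forall g, incl (atoms g) A -> (sat mv mR g <-> ev g).
Proof.
  intros HG g; unfold ev; induction g; simpl; intro Hi;
  try (rewrite IHg1, IHg2; [tauto| |]; intros z Hz; apply Hi; apply in_or_app; auto);
  try (rewrite IHg; [tauto|auto]).
  - unfold mv; tauto.
  - assert (HA : In (RAnd g1 g2) A) by (apply Hi; simpl; auto).
    assert (HB : In (RImp g1 g2) A) by (apply Hi; simpl; auto).
    rewrite IHg1, IHg2 by (intros z Hz; apply Hi; simpl; right; right; apply in_or_app; auto).
    destruct (HG _ HA) as [_ H2]. specialize (H2 g1 g2 eq_refl).
    destruct (HG _ HB) as [H3 _]. specialize (H3 g1 g2 eq_refl).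
    unfold ev in *. unfold mR. rewrite H2. split.
    + intros [a [b [[_ c]|c]]]; auto. split; auto. apply H3; auto.
    + intros [c [a b]]; auto.
  - assert (HB : In (RImp g1 g2) A) by (apply Hi; simpl; auto).
    rewrite IHg1, IHg2 by (intros z Hz; apply Hi; simpl; right; apply in_or_app; auto).
    destruct (HG _ HB) as [H3 _]. specialize (H3 g1 g2 eq_refl).
    unfold ev in *. unfold mR. split.
    + intros [_ [[_ c]|c]]; auto. apply H3; auto.
    + intros c. split; [apply H3; auto|]. left; auto.
Qed.
End Compl.

Fixpoint imps (Cs : list FOR) (f : FOR) : FOR :=
  match Cs with
  | [] => f
  | c :: Cs' => Imp c (imps Cs' f)
  end.

Lemma imps_ev : forall A w Cs f,
  ((forall c, In c Cs -> ev A w c) -> ev A w f) -> ev A w (imps Cs f).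
Proof.
  induction Cs; simpl; intros f H.
  - apply H; intros c [].
  - unfold ev in *; simpl. intro Ha. apply IHCs. intro Hc. apply H.
    intros c [<-|Hin]; auto.
Qed.

Lemma imps_atoms : forall A Cs f, (forall c, In c Cs -> incl (atoms c) A) ->
  incl (atoms f) A -> incl (atoms (imps Cs f)) A.
Proof.
  induction Cs; simpl; intros f H Hf; auto.
  intros z Hz. destruct (in_app_or _ _ _ Hz) as [Hz'|Hz'].
  - apply (H a); auto.
  - apply (IHCs f); auto.
Qed.

Lemma imps_mp : forall L Cs f, (forall c, In c Cs -> FL L c) -> FL L (imps Cs f) -> FL L f.
Proof.
  induction Cs; simpl; intros f H1 H2; auto.
  apply IHCs; auto. apply (FL_mp _ a); auto.
Qed.

Definition s2 (x y : FOR) : nat -> FOR :=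
  fun i => match i with 0 => x | 1 => y | _ => Var i end.

Lemma exists_Cs : forall T A, (forall a, In a A -> incl (atoms a) A) ->
  forall B, incl B A -> exists Cs,
    (forall c, In c Cs -> FL (K T) c) /\
    (forall c, In c Cs -> incl (atoms c) A) /\
    (forall w, (forall c, In c Cs -> ev A w c) -> forall a, In a B -> GoodAt T A w a).
Proof.
  intros T A Hcl. induction B as [|a B IH]; intro Hinc.
  - exists []. repeat split; intros; try contradiction; simpl in *; contradiction.
  - destruct IH as [Cs [H1 [H2 H3]]]. { intros z Hz; apply Hinc; simpl; auto. }
    assert (HaA : In a A) by (apply Hinc; simpl; auto).
    pose proof (Hcl a HaA) as Hat.
    destruct a as [i|a1|a1 a2|a1 a2|a1 a2|a1 a2|x y|x y].
    1-6: exists Cs; split; [auto|split; [auto|]]; intros w0 Hw b [<-|Hb]; [split; intros; discriminate|auto].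
    +
      exists (Iff (RAnd x y) (And (RImp x y) (And x y)) :: Cs). split; [|split].
      * intros c [<-|Hc]; auto.
        change (Iff (RAnd x y) (And (RImp x y) (And x y))) with
          (subst (s2 x y) (Iff (RAnd p q) (And (RImp p q) (And p q)))).
        apply FL_subst. apply FL_ax2.
      * intros c [<-|Hc]; auto. simpl in Hat |- *.
        intros z Hz. apply Hat. simpl in Hz.
        repeat (simpl in Hz |- *; rewrite in_app_iff in Hz || rewrite in_app_iff); simpl in Hz |- *; tauto.
      * intros w Hw b [<-|Hb].
        -- split; [intros; discriminate|]. intros x' y' E; injection E; intros -> ->.
           specialize (Hw _ (or_introl eq_refl)). unfold ev in Hw |- *. simpl in Hw. exact Hw.
        -- apply H3; auto. intros c Hc; apply Hw; simpl; auto.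
    +
      destruct (classic (R0 T x y)) as [HR|HR].
      * exists (Imp (RImp x y) (Imp x y) :: RImp x y :: Cs). split; [|split].
        -- intros c [<-|[<-|Hc]]; auto.
           ++ change (Imp (RImp x y) (Imp x y)) with (subst (s2 x y) (Imp (RImp p q) (Imp p q))).
              apply FL_subst. apply FL_ax1.
           ++ destruct HR as [s [k [Hk [-> ->]]]].
              change (RImp (subst s p) (subst s (ppow k))) with (subst s (RImp p (ppow k))).
              apply FL_subst, FL_hyp. exists k; auto.
        -- intros c [<-|[<-|Hc]]; auto; simpl in Hat |- *; intros z Hz; apply Hat; simpl in Hz;
           repeat (simpl in Hz |- *; rewrite in_app_iff in Hz || rewrite in_app_iff); simpl in Hz |- *; tauto.
        -- intros w Hw b [<-|Hb].
           ++ split; [|intros; discriminate]. intros x' y' E; injection E; intros -> ->.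
              pose proof (Hw _ (or_introl eq_refl)) as Hw1.
              pose proof (Hw _ (or_intror (or_introl eq_refl))) as Hw2.
              unfold ev in Hw1, Hw2 |- *. simpl in Hw1, Hw2. split; auto.
           ++ apply H3; auto. intros c Hc; apply Hw; simpl; auto.
      * exists (Imp (RImp x y) (Imp x y) :: Cs). split; [|split].
        -- intros c [<-|Hc]; auto.
           change (Imp (RImp x y) (Imp x y)) with (subst (s2 x y) (Imp (RImp p q) (Imp p q))).
           apply FL_subst. apply FL_ax1.
        -- intros c [<-|Hc]; auto; simpl in Hat |- *; intros z Hz; apply Hat; simpl in Hz;
           repeat (simpl in Hz |- *; rewrite in_app_iff in Hz || rewrite in_app_iff); simpl in Hz |- *; tauto.
        -- intros w Hw b [<-|Hb].
           ++ split; [|intros; discriminate]. intros x' y' E; injection E; intros -> ->.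
              pose proof (Hw _ (or_introl eq_refl)) as Hw1.
              unfold ev in Hw1 |- *. simpl in Hw1. split; [exact Hw1|]. intro; contradiction.
           ++ apply H3; auto. intros c Hc; apply Hw; simpl; auto.
Qed.

Lemma completeness : forall T f, (forall R, RT T R -> valid R f) -> FL (K T) f.
Proof.
  intros T f Hv.
  set (A := atoms f).
  destruct (exists_Cs T A (atoms_closed f) A (fun z h => h)) as [Cs [H1 [H2 H3]]].
  apply (imps_mp _ Cs); auto.
  apply FL_taut. exists (skel A (imps Cs f)), (fun n => nth n A p). split.
  - split; [apply skel_bool|]. intro w. apply imps_ev. intro Hc.
    apply (model_ok T A w (H3 w Hc) f (fun z h => h)).
    apply Hv. intros a b Hab. right; auto.
  - rewrite subst_skel; auto. apply imps_atoms; auto. intros z h; exact h.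
Qed.

Lemma part_i : forall T, epstein_complete (FL (K T)) /\
     same_set (FL (K T)) (fun f => forall R, RT T R -> valid R f).
Proof.
  intro T. assert (HS : same_set (FL (K T)) (fun f => forall R, RT T R -> valid R f)).
  { intro f; split; [apply soundness|apply completeness]. }
  split; auto. split.
  - split; [|split].
    + intros f H. induction H; [apply FL_taut|apply FL_ax1|apply FL_ax2|destruct H|apply FL_subst|apply (FL_mp _ f g)]; eauto.
    + intros; apply FL_subst; auto.
    + intros f g Hf Hg; exact (FL_mp _ f g Hf Hg).
  - exists (RT T); auto.
Qed.

Lemma subst_ppow_fix : forall s j, s 0 = Var 0 -> subst s (ppow j) = ppow j.
Proof. induction j; simpl; intros; auto. rewrite IHj; auto. unfold p; simpl. congruence. Qed.

Lemma ppow_inj : forall j k, ppow j = ppow k -> j = k.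
Proof.
  induction j; destruct k; simpl; intros H; try discriminate; auto.
  injection H; auto.
Qed.

Lemma distinct : forall T V k, T k -> ~ V k -> ~ same_set (FL (K T)) (FL (K V)).
Proof.
  intros T V k Tk Vk HS.
  assert (H : FL (K V) (RImp p (ppow k))).
  { apply HS. apply FL_hyp. exists k; auto. }
  pose proof (soundness V _ H (R0 V) (fun a b h => h) (fun _ => true)) as Hs.
  simpl in Hs. destruct Hs as [_ [s [j [Vj [E1 E2]]]]].
  unfold p in E1; simpl in E1.
  rewrite subst_ppow_fix in E2 by (symmetry; exact E1).
  apply ppow_inj in E2. subst. contradiction.
Qed.

Arguments Cantor.to_nat : simpl never.
Fixpoint enc (f : FOR) : nat :=
  match f with
  | Var i => Cantor.to_nat (0, i)
  | Neg a => Cantor.to_nat (1, enc a)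
  | Or a b => Cantor.to_nat (2, Cantor.to_nat (enc a, enc b))
  | And a b => Cantor.to_nat (3, Cantor.to_nat (enc a, enc b))
  | Imp a b => Cantor.to_nat (4, Cantor.to_nat (enc a, enc b))
  | Iff a b => Cantor.to_nat (5, Cantor.to_nat (enc a, enc b))
  | RAnd a b => Cantor.to_nat (6, Cantor.to_nat (enc a, enc b))
  | RImp a b => Cantor.to_nat (7, Cantor.to_nat (enc a, enc b))
  end.

Lemma to_nat_inj : forall x y, Cantor.to_nat x = Cantor.to_nat y -> x = y.
Proof.
  intros x y H. rewrite <- (Cantor.cancel_of_to x), <- (Cantor.cancel_of_to y), H; auto.
Qed.

Lemma enc_inj : forall f g, enc f = enc g -> f = g.
Proof.
  induction f; destruct g; simpl; intro H; apply to_nat_inj in H;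
  try discriminate; injection H; intros;
  try (apply to_nat_inj in H0; injection H0; intros);
  f_equal; auto.
Qed.

Theorem mainTheorem3 :
  (* (i) *)
  (forall T : nat -> Prop, admissible T ->
     epstein_complete (FL (K T)) /\
     same_set (FL (K T)) (fun f => forall R, RT T R -> valid R f)) /\
  (* (ii) *)
  (forall T V : nat -> Prop, admissible T -> admissible V ->
     ~ (forall k, T k <-> V k) ->
     ~ same_set (FL (K T)) (FL (K V))) /\
  (* exactly 2^aleph_0 Epstein complete logics: an injection from Cantor
     space into them and an injection from them into Cantor space
     (sets of formulas taken up to extensional equality) *)
  (exists F : (nat -> bool) -> (FOR -> Prop),
     (forall b, epstein_complete (F b)) /\
     (forall b b', same_set (F b) (F b') -> b = b')) /\
  (exists G : (FOR -> Prop) -> (nat -> bool),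
     forall L L', epstein_complete L -> epstein_complete L' ->
       G L = G L' -> same_set L L').
Proof.
  split; [intros; apply part_i|].
  split.
  { intros T V _ _ Hne HS. apply Hne. intro k.
    destruct (classic (T k)) as [Tk|Tk]; destruct (classic (V k)) as [Vk|Vk]; try tauto.
    - exfalso; exact (distinct T V k Tk Vk HS).
    - exfalso. apply (distinct V T k Vk Tk). intro f; symmetry; apply HS. }
  split.
  { exists (fun b => FL (K (fun k => b k = true))). split.
    - intro b; apply part_i.
    - intros b b' HS. apply functional_extensionality. intro k.
      destruct (b k) eqn:E1; destruct (b' k) eqn:E2; auto; exfalso.
      + assert (N : ~ (b' k = true)) by congruence.
        exact (distinct (fun k => b k = true) (fun k => b' k = true) k E1 N HS).
      + assert (N : ~ (b k = true)) by congruence.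
        apply (distinct (fun k => b' k = true) (fun k => b k = true) k E2 N).
        intro f; symmetry; apply HS. }
  exists (fun L n => if excluded_middle_informative (exists f, enc f = n /\ L f) then true else false).
  intros L L' _ _ HG f.
  pose proof (f_equal (fun g => g (enc f)) HG) as E. simpl in E.
  destruct (excluded_middle_informative (exists g, enc g = enc f /\ L g)) as [[g [Eg Lg]]|N1];
  destruct (excluded_middle_informative (exists g, enc g = enc f /\ L' g)) as [[g' [Eg' Lg']]|N2];
  try discriminate.
  - apply enc_inj in Eg; apply enc_inj in Eg'; subst; tauto.
  - split; intro; exfalso; [apply N1|apply N2]; eauto.
Qed.
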